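(* The set of points of exact period $2$ under $G$ lies on the line $u=-1$, and the Zariski closure in $\mathbb{C}^2$ of this set is the line $u=-1$ (the equation of period two orbits on the $(u,v)$-plane is $u=-1$).
   Context: Let \[ G(u,v)=\left(\frac{-u+v+uv}{u},\ \frac{u^{2}-u+v-u^{2}v-uv+uv^{2}+v^{2}}{u}\right), \] defined for $(u,v)\in\mathbb{C}^2$ with $u\neq 0$. A point $(u,v)$ has exact period $n$ under $G$ if the iterates $G^k(u,v)$, $0\le k\le n-1$, all have nonzero first coordinate, $G^n(u,v)=(u,v)$, and $G^k(u,v)\neq(u,v)$ for $0<k<n$. *)

(* Defs.v *)
From mathcomp Require Import all_boot all_algebra.
From mathcomp.real_closed Require Import complex.
From mathcomp Require Import Rstruct.
Set Implicit Arguments. Unset Strict Implicit. Unset Printing Implicit Defensive.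
Import GRing.Theory Num.Theory.
Local Open Scope ring_scope.

Notation CC := (complex Rdefinitions.R).

(* The map G on C^2 (as a total function; only used where u <> 0). *)
Definition G (p : CC * CC) : CC * CC :=
  let u := p.1 in let v := p.2 in
  ((- u + v + u * v) / u,
   (u ^+ 2 - u + v - u ^+ 2 * v - u * v + u * v ^+ 2 + v ^+ 2) / u).

Definition exact_period (n : nat) (p : CC * CC) : Prop :=
  (forall k, (k < n)%N -> (iter k G p).1 != 0) /\
  iter n G p = p /\
  (forall k, (0 < k < n)%N -> iter k G p <> p).

(* Evaluation of a bivariate polynomial P(X,Y) in {poly {poly CC}}
   (outer variable Y, coefficients polynomials in X) at (u,v). *)
Definition eval2 (P : {poly {poly CC}}) (u v : CC) : CC := (P.[v%:P]).[u].

Definition zariski_closure (S : CC * CC -> Prop) (p : CC * CC) : Prop :=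
  forall P : {poly {poly CC}},
    (forall q, S q -> eval2 P q.1 q.2 = 0) -> eval2 P p.1 p.2 = 0.

(* Main.v *)
Require Import Defs.
From mathcomp Require Import all_boot all_algebra.
From mathcomp.real_closed Require Import complex.
From mathcomp Require Import Rstruct.
From mathcomp Require Import ring.
Import GRing.Theory Num.Theory.
Local Open Scope ring_scope.

Definition F (u v : CC) := u ^+ 2 - u + v - u ^+ 2 * v - u * v + u * v ^+ 2 + v ^+ 2.

Lemma two_neq0 : (2 : CC) != 0.
Proof. by rewrite pnatr_eq0. Qed.

Lemma sub0eq (x y : CC) : x - y = 0 -> x = y.
Proof. by move/eqP; rewrite subr_eq0 => /eqP. Qed.

Lemma per2_alg (u v w z : CC) : u != 0 -> w != 0 ->
  u * w - (- u + v + u * v) = 0 -> u * z - F u v = 0 ->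
  w * u - (- w + z + w * z) = 0 -> w * v - F w z = 0 ->
  (w, z) <> (u, v) -> u = -1.
Proof.
move=> hu hw e1 e2 e3 e4 hne.
apply/eqP; rewrite -subr_eq0 opprK; apply/negPn/negP => hs.
have ht : w + 1 != 0.
  apply/negP => /eqP h.
  have hw1 : w = -1 by apply: sub0eq; rewrite opprK.
  move: e3; rewrite hw1 => e3.
  have : u + 1 = 0.
    have -> : u + 1 = - (-1 * u - (- -1 + z + -1 * z)) by ring.
    by rewrite e3 oppr0.
  by move/eqP; rewrite (negPf hs).
have hv1 : v * (u + 1) = u * (w + 1).
  apply: sub0eq; have -> : v * (u + 1) - u * (w + 1) = - (u * w - (- u + v + u * v)) by ring.
  by rewrite e1 oppr0.
have hz1 : z * (w + 1) = w * (u + 1).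
  apply: sub0eq; have -> : z * (w + 1) - w * (u + 1) = - (w * u - (- w + z + w * z)) by ring.
  by rewrite e3 oppr0.
have hv : v = u * (w + 1) / (u + 1) by rewrite -hv1; field.
have hz : z = w * (u + 1) / (w + 1) by rewrite -hz1; field.
have E1 : u * ((u - w) * ((u - w) + (w + 1) ^+ 2 * (- u))) = 0.
  have -> : u * ((u - w) * ((u - w) + (w + 1) ^+ 2 * (- u)))
     = - (u * z - F u v) * ((u + 1) * (w + 1)).
    by rewrite /F hv hz; field; rewrite ht hs.
  by rewrite e2 oppr0 mul0r.
have E2 : w * ((w - u) * ((w - u) + (u + 1) ^+ 2 * (- w))) = 0.
  have -> : w * ((w - u) * ((w - u) + (u + 1) ^+ 2 * (- w)))
     = - (w * v - F w z) * ((u + 1) * (w + 1)).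
    by rewrite /F hv hz; field; rewrite ht hs.
  by rewrite e4 oppr0 mul0r.
have [uw | uw] := eqVneq u w.
  apply: False_ind; apply: hne.
  have vu : v = u by rewrite hv -uw; field.
  have zu : z = u by rewrite hz -uw; field.
  by rewrite vu zu uw.
have uw' : u - w != 0 by rewrite subr_eq0.
have wu' : w - u != 0 by rewrite subr_eq0 eq_sym.
move/eqP: E1; rewrite !mulf_eq0 (negPf hu) (negPf uw') /= => /eqP A.
move/eqP: E2; rewrite !mulf_eq0 (negPf hw) (negPf wu') /= => /eqP B.
have C1 : (u + 1) * (w + 2) - (w + 1) = 0.
  have : - w * ((u + 1) * (w + 2) - (w + 1)) = 0.
    by rewrite -A; ring.
  by move/eqP; rewrite mulf_eq0 oppr_eq0 (negPf hw) => /eqP.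
have C2 : (w + 1) * (u + 2) - (u + 1) = 0.
  have : - u * ((w + 1) * (u + 2) - (u + 1)) = 0.
    by rewrite -B; ring.
  by move/eqP; rewrite mulf_eq0 oppr_eq0 (negPf hu) => /eqP.
have : 2 * (u - w) = 0.
  have -> : 2 * (u - w) = ((u + 1) * (w + 2) - (w + 1)) - ((w + 1) * (u + 2) - (u + 1)) by ring.
  by rewrite C1 C2 subr0.
by move/eqP; rewrite mulf_eq0 (negPf two_neq0) (negPf uw').
Qed.

Lemma m10 : (-1 : CC) != 0.
Proof. rewrite oppr_eq0. exact: oner_neq0. Qed.

Lemma Gline (y : CC) : G (-1, y) = (-1, -2 - y).
Proof. rewrite /G /= invrN1; congr pair; ring. Qed.

Lemma iter1 (y : CC) : iter 1 G (-1, y) = (-1, -2 - y).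
Proof. by rewrite -Gline. Qed.

Lemma iter2 (y : CC) : iter 2 G (-1, y) = (-1, y).
Proof.
have -> : iter 2 G (-1, y) = G (iter 1 G (-1, y)) by [].
by rewrite iter1 Gline; congr pair; ring.
Qed.

Lemma period_line (y : CC) : y != -1 -> exact_period 2 (-1, y).
Proof.
move=> hy; split; [|split].
- case=> [|[|k]] // _; first exact: m10.
  by rewrite iter1; exact: m10.
- exact: iter2.
- case=> [|[|k]] // _; rewrite iter1 => [[e]].
  move: hy; have -> : y = -1.
    have : 2 * (y + 1) = 0.
      have -> : 2 * (y + 1) = - ((-2 - y) - y) by ring.
      by rewrite e subrr oppr0.
    move/eqP; rewrite mulf_eq0 (negPf two_neq0) /= => /eqP h.
    by apply: sub0eq; rewrite opprK.
  by rewrite eqxx.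
Qed.

Lemma poly_line0 (Q : {poly CC}) : (forall y, y != -1 -> Q.[y] = 0) -> Q = 0.
Proof.
move=> hQ; apply/eqP; apply/negPn/negP => nz.
have := max_poly_roots nz (rs := [seq (i%:R : CC) | i <- iota 0 (size Q)]).
rewrite size_map size_iota ltnn => H; suff : false by []; apply: H.
- apply/allP => x /mapP [i _ ->]; apply/rootP; apply: hQ.
  apply/negP => /eqP h.
  have : (i.+1)%:R == 0 :> CC by rewrite -addn1 natrD h addNr.
  by rewrite pnatr_eq0.
- rewrite map_inj_uniq ?iota_uniq //; move=> a b /eqP; rewrite eqr_nat => /eqP.
  done.
Qed.

Theorem mainTheorem4 :
  (forall p : CC * CC, exact_period 2 p -> p.1 = -1) /\
  (forall p : CC * CC, zariski_closure (exact_period 2) p <-> p.1 = -1).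
Proof.
have part1 : forall p : CC * CC, exact_period 2 p -> p.1 = -1.
  move=> [u v] [h1 [h2 h3]] /=.
  have hu : u != 0 by exact: (h1 0%N).
  have hw0 := h1 1%N erefl.
  have h31 := h3 1%N erefl.
  have h21 : G (G (u, v)) = (u, v) by [].
  move: hw0 h31 h21.
  rewrite (_ : iter 1 G (u, v) = G (u, v)) //.
  case hG: (G (u, v)) => [w z] /= hw h31 h21.
  move: hG; rewrite /G /= => [[ew ez]].
  move: h21; rewrite /G /= => [[eu ev]].
  apply: (per2_alg u v w z hu hw).
  - by rewrite -ew; field.
  - by rewrite -ez /F; field.
  - by rewrite -{1}eu; field.
  - by rewrite -{1}ev /F; field.
  - exact: h31.
split=> //.
move=> [x y]; split => /=.
- move=> hz.
  have ev : forall a b : CC, eval2 (('X + 1)%:P) a b = a + 1.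
    by move=> a b; rewrite /eval2 hornerC hornerD hornerX hornerC.
  have := hz (('X + 1)%:P); rewrite ev => h.
  apply: sub0eq; rewrite opprK; apply: h => q /part1 e.
  by rewrite ev e addNr.
- move=> -> P hP.
  have := poly_line0 (map_poly (horner_eval (-1)) P).
  move=> H.
  have e : forall y0, eval2 P (-1) y0 = (map_poly (horner_eval (-1)) P).[y0].
    move=> y0; rewrite /eval2.
    have -> : y0 = horner_eval (-1) y0%:P by rewrite /horner_eval hornerC.
    by rewrite horner_map /horner_eval hornerC.
  rewrite e H ?horner0 // => y0 hy0.
  by rewrite -e; apply: (hP (-1, y0)); exact: period_line.
Qed.
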